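(* For any finite interval $\Lambda\subset\mathbb Z$, the map $\boldsymbol\sigma_\Lambda:\mathcal D_\Lambda\to\{0,1\}^\Lambda$ assigning to each VMD tiling its particle configuration is injective.
   Context: Tilings of a finite interval $\Lambda$: a tile occupies consecutive sites and carries a 0/1 word (its particle content): void $0$; monomer $100$; dimer $011000$; left boundary dimer $11000$ (allowed only as the first tile of $\Lambda$); and, allowed only as the last tile of $\Lambda$: right dimer $011$, right 1-monomer $1$, right 2-monomer $10$, truncated 1-dimer $0110$, truncated 2-dimer $01100$. A root tiling $R$ of $\Lambda$ is a tiling of $\Lambda$ by consecutive tiles consisting of voids and monomers, optionally with a left boundary dimer as first tile and optionally with one of right dimer, right 1-monomer, right 2-monomer as last tile; $\mathcal R_\Lambda$ denotes their set. A VMD tiling derived from $R$ is obtained by choosing a collection of disjoint pairs of consecutive tiles of $R$, each pair being either two monomers (replaced by a dimer) or a monomer followed by a right $j$-monomer, $j\in\{1,2\}$ (replaced by the truncated $j$-dimer); $\mathcal D_\Lambda(R)$ is the set of these and $\mathcal D_\Lambda=\bigcup_{R\in\mathcal R_\Lambda}\mathcal D_\Lambda(R)$. The configuration $\boldsymbol\sigma_\Lambda(\mathbf D)\in\{0,1\}^\Lambda$ of a tiling $\mathbf D$ is the concatenation of the particle contents of its tiles. *)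

(* Defs.v *)
From mathcomp Require Import all_boot.
Set Implicit Arguments. Unset Strict Implicit. Unset Printing Implicit Defensive.

(* A finite interval Lambda of Z is determined, up to translation, by its
   number of sites n; a configuration in {0,1}^Lambda is identified with the
   0/1 word (seq bool) of length n read from left to right.
   A tiling by consecutive tiles is identified with the list of its tiles
   from left to right (positions are then determined). *)

Inductive tile :=
  | Void
  | Mono
  | Dimer
  | LDimer        (* 11000, only first tile *)
  | RDimer        (* 011, only last tile *)
  | RMono1        (* 1, only last tile *)
  | RMono2        (* 10, only last tile *)
  | TDimer1       (* 0110, only last tile *)
  | TDimer2.      (* 01100, only last tile *)

Definition content (t : tile) : seq bool :=
  match t with
  | Void => [:: false]
  | Mono => [:: true; false; false]
  | Dimer => [:: false; true; true; false; false; false]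
  | LDimer => [:: true; true; false; false; false]
  | RDimer => [:: false; true; true]
  | RMono1 => [:: true]
  | RMono2 => [:: true; false]
  | TDimer1 => [:: false; true; true; false]
  | TDimer2 => [:: false; true; true; false; false]
  end.

Definition sigma (D : seq tile) : seq bool := flatten (map content D).

Definition is_bulk_root_tile (t : tile) : bool :=
  match t with Void | Mono => true | _ => false end.

Definition is_right_root_tile (t : tile) : bool :=
  match t with RDimer | RMono1 | RMono2 => true | _ => false end.

Definition root_tiling (n : nat) (R : seq tile) : Prop :=
  exists (l : seq tile) (m : seq tile) (r : seq tile),
    [/\ R = l ++ m ++ r,
        l = [::] \/ l = [:: LDimer],
        all is_bulk_root_tile m,
        r = [::] \/ (exists t, r = [:: t] /\ is_right_root_tile t)
      & size (sigma R) = n].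

Inductive derived : seq tile -> seq tile -> Prop :=
  | der_nil : derived [::] [::]
  | der_keep t R D : derived R D -> derived (t :: R) (t :: D)
  | der_dimer R D : derived R D -> derived (Mono :: Mono :: R) (Dimer :: D)
  | der_trunc1 R D : derived R D -> derived (Mono :: RMono1 :: R) (TDimer1 :: D)
  | der_trunc2 R D : derived R D -> derived (Mono :: RMono2 :: R) (TDimer2 :: D).

Definition VMD_tiling (n : nat) (D : seq tile) : Prop :=
  exists R, root_tiling n R /\ derived R D.

(* Main.v *)
Require Import Defs.
From mathcomp Require Import all_boot.

Fixpoint decb (w : seq bool) : seq tile :=
  match w with
  | [::] => [::]
  | true :: false :: false :: r => Mono :: decb r
  | [:: true] => [:: RMono1]
  | [:: true; false] => [:: RMono2]
  | false :: true :: true :: false :: false :: false :: r => Dimer :: decb r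
  | [:: false; true; true] => [:: RDimer]
  | [:: false; true; true; false] => [:: TDimer1]
  | [:: false; true; true; false; false] => [:: TDimer2]
  | false :: r => Void :: decb r
  | _ => [::]
  end.

Definition dec (w : seq bool) : seq tile :=
  match w with
  | true :: true :: false :: false :: false :: r => LDimer :: decb r
  | _ => decb w
  end.

Definition bulkD (t : tile) : bool :=
  match t with Void | Mono | Dimer => true | _ => false end.
Definition lastD (t : tile) : bool :=
  match t with RDimer | RMono1 | RMono2 | TDimer1 | TDimer2 => true | _ => false end.

Fixpoint wfD (D : seq tile) : bool :=
  match D with
  | [::] => true
  | t :: D' => if bulkD t then wfD D' else (lastD t && (if D' is [::] then true else false))
  end.

Fixpoint wfR (D : seq tile) : bool :=
  match D with
  | [::] => true
  | t :: D' => if is_bulk_root_tile t then wfR D'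
               else (is_right_root_tile t && (if D' is [::] then true else false))
  end.

Lemma derived_nil D : derived [::] D -> D = [::].
Proof. by move=> H; inversion H. Qed.

Lemma derived_wf R D : derived R D -> wfR R -> wfD D.
Proof.
elim=> //=.
- move=> t R' D' HD IH; case: t => //=;
  by case: R' HD IH => // /derived_nil ->.
- by move=> R' D' HD IH; case: R' HD IH => // /derived_nil ->.
- by move=> R' D' HD IH; case: R' HD IH => // /derived_nil ->.
Qed.

Lemma sigma_cons t D : sigma (t :: D) = content t ++ sigma D.
Proof. by []. Qed.

Lemma decb_void w : take 2 w != [:: true; true] -> decb (false :: w) = Void :: decb w.
Proof.
by case: w => [|[] [|[] w']] //=; case: w' => [|[] w''].
Qed.

Lemma take2_wf D : wfD D -> take 2 (sigma D) != [:: true; true].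
Proof.
case: D => [|t D] //=; case: t => //=; by case: D.
Qed.

Lemma decb_wf D : wfD D -> decb (sigma D) = D.
Proof.
elim: D => [|t D IH] //=.
rewrite sigma_cons; case: t => H.
- rewrite [content Void ++ _]/= decb_void ?take2_wf // IH //.
- by rewrite /= IH.
- by rewrite /= IH.
- by [].
- by case: D H IH.
- by case: D H IH.
- by case: D H IH.
- by case: D H IH.
- by case: D H IH.
Qed.

Lemma dec_wf D : wfD D -> dec (sigma D) = D.
Proof.
move=> H; transitivity (decb (sigma D)); last exact: decb_wf.
case: D H => [|t D] //=; case: t => //=; by case: D.
Qed.

Lemma wfR_cat m r : all is_bulk_root_tile m ->
  (r = [::] \/ (exists t, r = [:: t] /\ is_right_root_tile t)) -> wfR (m ++ r).
Proof.
elim: m => [|t m IH] /=.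
- by move=> _ [->|[t [-> Ht]]] //=; rewrite Ht; case: t Ht.
- by move=> /andP [Ht Hm] Hr; rewrite Ht IH.
Qed.

Lemma dec_VMD n D : VMD_tiling n D -> dec (sigma D) = D.
Proof.
move=> [R [[l [m [r [-> Hl Hm Hr _]]]] HD]].
have Hw := wfR_cat _ _ Hm Hr.
case: Hl => ?; subst l => /=.
- by apply: dec_wf; apply: (derived_wf _ _ HD).
- inversion HD as [|t0 R0 D0 HD0| | |]; subst.
  have Hw' := derived_wf _ _ HD0 Hw.
  by rewrite sigma_cons /= (decb_wf _ Hw').
Qed.

Theorem lemma2p2 (n : nat) (D1 D2 : seq tile) :
  VMD_tiling n D1 -> VMD_tiling n D2 -> sigma D1 = sigma D2 -> D1 = D2.
Proof.
move=> H1 H2 E; by rewrite -(dec_VMD _ _ H1) -(dec_VMD _ _ H2) E.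
Qed.
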